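(* Assume the balanced case $\beta_0=C$, $A>0$ and $\Delta=B^2-4AC<0$; set $p=-B/(2A)$, $q=\sqrt{-\Delta}/(2A)>0$. Then, with the principal branch $\arctan\in(-\pi/2,\pi/2)$ and as an identity of analytic functions for $t$ near $0$ (away from zeros of the cosine), \[ w(x,t)=\exp\bigl[(\alpha_0p+\gamma_0)t\bigr]\left[\frac{q}{\sqrt{(x-p)^2+q^2}\,\cos\bigl(Aqt+\arctan\frac{x-p}{q}\bigr)}\right]^{\alpha_0/A}. \]
   Context: Fix nonnegative integers $a,b,c,\alpha_0,\beta_0,\gamma_0$, $\alpha_k=ak+\alpha_0$, $\beta_k=bk+\beta_0$, $\gamma_k=ck+\gamma_0$; $w_{0,0}=1$, $w_{n,k}=0$ for $k<0$ or $k>n$, $w_{n+1,k}=\alpha_{k-1}w_{n,k-1}+\gamma_k w_{n,k}+\beta_k w_{n,k+1}$. $A=a$, $B=c$, $C=b$; balanced means $\beta_0=C$. $P_n(x)=\sum_k w_{n,k}x^k$, $w(x,t)=\sum_{n\ge0}P_n(x)t^n/n!$. *)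

(* Defs.v *)
From Stdlib Require Import Reals Arith Lra.
From Coquelicot Require Export Coquelicot.
Open Scope R_scope.

(* Row n of the triangle: wrow n k = w_{n,k} (k : nat, so w_{n,k}=0 for k<0 is
   built in: the k=0 case of the recurrence omits the alpha_{-1} term).
   alpha_k = a k + al, beta_k = b k + be, gamma_k = c k + ga. *)
Fixpoint wrow (a b c al be ga : nat) (n : nat) : nat -> nat :=
  match n with
  | O => fun k => if Nat.eqb k 0 then 1%nat else 0%nat
  | S m =>
      let prev := wrow a b c al be ga m in
      fun k => match k with
      | O => (ga * prev 0%nat + be * prev 1%nat)%nat
      | S j => ((a * j + al) * prev j
                + (c * S j + ga) * prev (S j)
                + (b * S j + be) * prev (S (S j)))%nat
      end
  end.

Definition Pn (a b c al be ga n : nat) (x : R) : R :=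
  sum_f_R0 (fun k => INR (wrow a b c al be ga n k) * x ^ k) n.

(* Main.v *)
Require Import Defs.
From Stdlib Require Import Reals Lra Lia.
From Coquelicot Require Import Coquelicot.
Open Scope R_scope.

Lemma wrow_zero a b c al be ga : forall n k, (n < k)%nat -> wrow a b c al be ga n k = 0%nat.
Proof.
  induction n as [|n IH]; intros k Hk.
  - simpl. destruct k; [lia|reflexivity].
  - simpl. destruct k as [|j]; [lia|].
    rewrite !IH by lia. lia.
Qed.

Definition Dn (a b c al be ga n : nat) (y : R) : R :=
  sum_f_R0 (fun k => INR (wrow a b c al be ga n k) * INR k * y ^ pred k) n.

Lemma sum_ext_zero (f : nat -> R) n : forall j, (forall k, (n < k)%nat -> f k = 0) ->
  sum_f_R0 f (n + j) = sum_f_R0 f n.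
Proof.
  induction j; intros H.
  - rewrite Nat.add_0_r; reflexivity.
  - rewrite Nat.add_succ_r, tech5, IHj by auto. rewrite H by lia. ring.
Qed.

Lemma sum_ext_le (f : nat -> R) n N : (n <= N)%nat -> (forall k, (n < k)%nat -> f k = 0) ->
  sum_f_R0 f N = sum_f_R0 f n.
Proof.
  intros HN H. replace N with (n + (N - n))%nat by lia. now apply sum_ext_zero.
Qed.

Lemma sum_shift (f : nat -> R) N : sum_f_R0 (fun k => f (S k)) N = sum_f_R0 f (S N) - f 0%nat.
Proof.
  induction N; simpl; [ring|]. rewrite IHN. simpl. ring.
Qed.

Lemma Pn_0 a b c al be ga y : Pn a b c al be ga 0 y = 1.
Proof. unfold Pn. simpl. ring. Qed.

Lemma Pn_rec a b c al be ga n y : be = b ->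
  Pn a b c al be ga (S n) y =
  (INR a * y ^ 2 + INR c * y + INR b) * Dn a b c al be ga n y
  + (INR al * y + INR ga) * Pn a b c al be ga n y.
Proof.
  intros ->.
  set (w := fun k => INR (wrow a b c al b ga n k)).
  assert (Hz : forall k, (n < k)%nat -> w k = 0).
  { intros k Hk. unfold w. rewrite wrow_zero by lia. reflexivity. }
  set (N := S (S n)).
  assert (E1 : Pn a b c al b ga (S n) y = sum_f_R0 (fun k => INR (wrow a b c al b ga (S n) k) * y ^ k) N).
  { unfold Pn. symmetry. apply sum_ext_le; [unfold N; lia|].
    intros k Hk. rewrite wrow_zero by lia. simpl; ring. }
  set (A := fun k => match k with O => 0 | S j => (INR a * INR j + INR al) * w j end).
  set (B := fun k => (INR c * INR k + INR ga) * w k).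
  set (C := fun k => (INR b * INR (S k)) * w (S k)).
  assert (Ew : forall k, INR (wrow a b c al b ga (S k) 0) = 0 \/ True) by auto.
  assert (Ek : forall k, INR (wrow a b c al b ga (S n) k) = A k + B k + C k).
  { intros [|j]; unfold A, B, C, w; simpl wrow;
      rewrite ?plus_INR, ?mult_INR, ?plus_INR, ?mult_INR; simpl INR; try ring. }
  rewrite E1.
  rewrite (sum_eq _ (fun k => A k * y ^ k + B k * y ^ k + C k * y ^ k)) by (intros; rewrite Ek; ring).
  rewrite !sum_plus.
  assert (HA : sum_f_R0 (fun k => A k * y ^ k) N =
     sum_f_R0 (fun j => (INR a * INR j + INR al) * w j * y ^ S j) n).
  { unfold N. pose proof (sum_shift (fun k => A k * y ^ k) (S n)) as Hs. cbv beta in Hs.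
    replace (A 0%nat * y ^ 0) with 0 in Hs by (unfold A; ring). rewrite Rminus_0_r in Hs; rewrite <- Hs.
    apply sum_ext_le; [lia|]. intros k Hk. unfold A. rewrite Hz by lia. ring. }
  assert (HB : sum_f_R0 (fun k => B k * y ^ k) N = sum_f_R0 (fun k => B k * y ^ k) n).
  { apply sum_ext_le; [unfold N; lia|]. intros k Hk. unfold B. rewrite Hz by lia. ring. }
  assert (HC : sum_f_R0 (fun k => C k * y ^ k) N =
     sum_f_R0 (fun j => INR b * INR j * w j * y ^ pred j) n).
  { rewrite (sum_eq _ (fun k => (fun j => INR b * INR j * w j * y ^ pred j) (S k))).
    2:{ intros; unfold C; simpl pred; ring. }
    pose proof (sum_shift (fun j => INR b * INR j * w j * y ^ pred j) N) as Hs. cbv beta in Hs.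
    rewrite Hs. simpl INR. rewrite Rmult_0_r, !Rmult_0_l, Rminus_0_r.
    apply sum_ext_le; [unfold N; lia|]. intros k Hk. rewrite Hz by lia. ring. }
  rewrite HA, HB, HC. unfold Dn, Pn. fold w.
  rewrite !scal_sum. rewrite <- !sum_plus.
  apply sum_eq. intros k Hk. unfold B.
  unfold w. destruct k as [|k].
  - simpl. ring.
  - rewrite S_INR. simpl pred. simpl pow. ring.
Qed.

Lemma is_derive_eq (f : R -> R) x l l' : is_derive f x l -> l = l' -> is_derive f x l'.
Proof. intros H <-; exact H. Qed.

Lemma poly_derive (cf : nat -> R) N y :
  is_derive (fun y => sum_f_R0 (fun k => cf k * y ^ k) N) y
            (sum_f_R0 (fun k => cf k * INR k * y ^ pred k) N).
Proof.
  induction N.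
  - simpl. apply (is_derive_eq _ _ 0). all: try (simpl; ring).
    exact (@is_derive_const R_AbsRing R_NormedModule (cf 0%nat * 1) y).
  - apply (is_derive_ext (fun y => sum_f_R0 (fun k => cf k * y ^ k) N + cf (S N) * y ^ S N)).
    { intros t. symmetry. apply tech5. }
    rewrite tech5.
    apply (is_derive_plus _ (fun y => cf (S N) * y ^ (S N))). exact IHN.
    rewrite Rmult_assoc. apply is_derive_scal.
    apply (is_derive_eq _ _ (INR (S N) * 1 * y ^ pred (S N))); [|simpl; ring].
    apply (is_derive_pow (fun x => x)). exact (@is_derive_id R_AbsRing y).
Qed.

Lemma Pn_derive a b c al be ga n y :
  is_derive (Pn a b c al be ga n) y (Dn a b c al be ga n y).
Proof. apply poly_derive. Qed.

Lemma Pn_nonneg a b c al be ga n R : 0 <= R -> 0 <= Pn a b c al be ga n R.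
Proof.
  intros HR. unfold Pn. apply cond_pos_sum. intros k.
  apply Rmult_le_pos; [apply pos_INR|apply pow_le; lra].
Qed.

Lemma Dn_nonneg a b c al be ga n R : 0 <= R -> 0 <= Dn a b c al be ga n R.
Proof.
  intros HR. unfold Dn. apply cond_pos_sum. intros k.
  apply Rmult_le_pos; [apply Rmult_le_pos; apply pos_INR|apply pow_le; lra].
Qed.

Lemma Pn_abs a b c al be ga n y R : Rabs y <= R ->
  Rabs (Pn a b c al be ga n y) <= Pn a b c al be ga n R.
Proof.
  intros HR. unfold Pn. eapply Rle_trans; [apply sum_f_R0_triangle|].
  apply sum_Rle. intros k _. rewrite Rabs_mult, Rabs_right by (apply Rle_ge, pos_INR).
  apply Rmult_le_compat_l; [apply pos_INR|]. rewrite <- RPow_abs.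
  apply pow_incr. split; [apply Rabs_pos|exact HR].
Qed.

Lemma Dn_le a b c al be ga n R : 1 <= R ->
  Dn a b c al be ga n R <= INR n * Pn a b c al be ga n R.
Proof.
  intros HR. unfold Dn, Pn. rewrite scal_sum.
  apply sum_Rle. intros k Hk.
  assert (Hw := pos_INR (wrow a b c al be ga n k)).
  assert (Hkn : INR k <= INR n) by (apply le_INR; lia).
  destruct k as [|k].
  - simpl. rewrite Rmult_0_r, Rmult_0_l. apply Rmult_le_pos; [|apply pos_INR]. lra.
  - simpl pred. simpl pow.
    assert (0 <= R ^ k) by (apply pow_le; lra).
    assert (R ^ k <= R * R ^ k) by nra.
    assert (0 <= INR (S k)) by apply pos_INR.
    assert (INR (S k) * R ^ k <= INR n * (R * R ^ k)) by
      (apply Rmult_le_compat; lra).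
    nra.
Qed.

Lemma Pn_bound a b c al be ga R : be = b -> 1 <= R -> forall n,
  Pn a b c al be ga n R <=
  INR (Factorial.fact n) * ((INR a * R ^ 2 + INR c * R + INR b) + (INR al * R + INR ga)) ^ n.
Proof.
  intros Hbe HR.
  set (f := INR a * R ^ 2 + INR c * R + INR b).
  set (g := INR al * R + INR ga).
  assert (Hf : 0 <= f).
  { unfold f. assert (0 <= R^2) by (apply pow_le; lra).
    pose proof (pos_INR a); pose proof (pos_INR b); pose proof (pos_INR c). nra. }
  assert (Hg : 0 <= g).
  { unfold g. pose proof (pos_INR al); pose proof (pos_INR ga). nra. }
  induction n.
  - rewrite Pn_0. simpl. lra.
  - rewrite Pn_rec by exact Hbe. fold f g.
    pose proof (Dn_le a b c al be ga n R HR).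
    pose proof (Dn_nonneg a b c al be ga n R ltac:(lra)).
    pose proof (Pn_nonneg a b c al be ga n R ltac:(lra)).
    pose proof (pos_INR n).
    change (Factorial.fact (S n)) with (S n * Factorial.fact n)%nat. rewrite mult_INR, S_INR.
    simpl pow.
    assert (0 <= INR (Factorial.fact n) * (f + g) ^ n)
      by (apply Rmult_le_pos; [apply pos_INR|apply pow_le; lra]).
    assert (f * Dn a b c al be ga n R <= f * (INR n * Pn a b c al be ga n R))
      by (apply Rmult_le_compat_l; lra).
    set (P := Pn a b c al be ga n R) in *.
    set (M := INR (Factorial.fact n) * (f + g) ^ n) in *.
    assert (f * INR n * P <= f * INR n * M) by (apply Rmult_le_compat_l; nra).
    assert (g * P <= g * M) by (apply Rmult_le_compat_l; lra).
    replace ((INR n + 1) * INR (Factorial.fact n) * ((f + g) * (f + g) ^ n))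
      with ((INR n + 1) * (f + g) * M) by (unfold M; ring).
    assert (0 <= g * INR n * M) by (apply Rmult_le_pos; [apply Rmult_le_pos|]; lra).
    assert (0 <= f * M) by (apply Rmult_le_pos; lra).
    assert (0 <= g * M) by (apply Rmult_le_pos; lra).
    nra.
Qed.

Lemma is_derive_eq' (f : R -> R) x l l' : is_derive f x l -> l = l' -> is_derive f x l'.
Proof. intros H <-; exact H. Qed.

Lemma lim_bound (S : nat -> R) L N B : Un_cv S L ->
  (forall m, (N <= m)%nat -> Rabs (S m - S N) <= B) -> Rabs (L - S N) <= B.
Proof.
  intros HL HB. destruct (Rle_lt_dec (Rabs (L - S N)) B) as [h|h]; [exact h|].
  exfalso. destruct (HL (Rabs (L - S N) - B)) as [M HM]; [lra|].
  specialize (HM (Nat.max M N) ltac:(lia)). specialize (HB (Nat.max M N) ltac:(lia)).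
  unfold Rdist in HM.
  pose proof (Rabs_triang (L - S (Nat.max M N)) (S (Nat.max M N) - S N)).
  replace (L - S (Nat.max M N) + (S (Nat.max M N) - S N)) with (L - S N) in H by ring.
  rewrite Rabs_minus_sym in HM. lra.
Qed.

Lemma geom_aux n : (INR n + 2) * (/4) ^ n <= 2 * (/2) ^ n.
Proof.
  induction n.
  - simpl. lra.
  - rewrite S_INR. simpl pow.
    assert (0 <= (/4)^n) by (apply pow_le; lra).
    assert (0 <= INR n) by apply pos_INR.
    nra.
Qed.

Lemma core (P D : nat -> R -> R) (f g phi G : R -> R) (t d Kc : R) :
 (forall n y, is_derive (P n) y (D n y)) ->
 (forall n y, P (S n) y = f y * D n y + g y * P n y) ->
 (forall y, P 0%nat y = 1) ->
 (forall n s, Rabs s < d -> Rabs (P n (phi s)) <= INR (Factorial.fact n) * Kc ^ n) ->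
 (forall s, Rabs s < d -> Rabs (g (phi s)) <= Kc) ->
 (forall s, Rabs s < d -> is_derive phi s (f (phi s))) ->
 (forall s, Rabs s < d -> is_derive G s (g (phi s) * G s)) ->
 G 0 = 1 -> 0 < Kc -> 0 < d -> 8 * d * Kc <= 1 -> Rabs t < d ->
 is_series (fun n => P n (phi 0) * t ^ n / INR (Factorial.fact n)) (G t).
Proof.
  intros HD Hrec H0 HP Hg Hphi HG HG0 HK Hd HdK Ht.
  set (u := fun n s => P n (phi s) * (/ INR (Factorial.fact n) * (t - s) ^ n)).
  assert (Hfact : forall n, 0 < INR (Factorial.fact n)) by (intros; apply lt_0_INR, Factorial.lt_O_fact).
  assert (Htau : forall s, Rabs s < d -> Kc * Rabs (t - s) <= /4).
  { intros s Hs. pose proof (Rabs_triang t (-s)). rewrite Rabs_Ropp in H.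
    unfold Rminus. nra. }
  assert (Hu : forall n s, Rabs s < d -> Rabs (u n s) <= (/4) ^ n).
  { intros n s Hs. unfold u.
    rewrite Rabs_mult, Rabs_mult, Rabs_inv, <- RPow_abs, (Rabs_right (INR _)) by (apply Rle_ge; apply Rlt_le; apply Hfact).
    specialize (HP n s Hs). specialize (Hfact n).
    assert (0 <= Rabs (t - s) ^ n) by (apply pow_le, Rabs_pos).
    apply Rle_trans with (INR (Factorial.fact n) * Kc ^ n * (/ INR (Factorial.fact n) * Rabs (t - s) ^ n)).
    { apply Rmult_le_compat_r; [|exact HP]. apply Rmult_le_pos; [|lra]. apply Rlt_le, Rinv_0_lt_compat; lra. }
    replace (INR (Factorial.fact n) * Kc ^ n * (/ INR (Factorial.fact n) * Rabs (t - s) ^ n))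
      with ((Kc * Rabs (t - s)) ^ n) by (rewrite Rpow_mult_distr; field; lra).
    apply pow_incr. split; [apply Rmult_le_pos; [lra|apply Rabs_pos]|apply Htau; exact Hs]. }
  assert (Hex : forall s, Rabs s < d -> ex_series (fun n => u n s)).
  { intros s Hs. apply (@ex_series_le R_AbsRing R_CompleteNormedModule _ (fun n => (/4) ^ n)).
    - intros n. exact (Hu n s Hs).
    - exists (/ (1 - /4)). apply is_series_geom. rewrite Rabs_right; lra. }
  set (Ks := fun s => Series (fun n => u n s)).
  assert (Hcv : forall s, Rabs s < d -> Un_cv (fun N => sum_f_R0 (fun k => u k s) N) (Ks s)).
  { intros s Hs. apply (proj1 (is_series_Reals _ _)). apply Series_correct. apply Hex; exact Hs. }
  assert (Htail : forall s N, Rabs s < d -> Rabs (Ks s - sum_f_R0 (fun k => u k s) N) <= (/4) ^ N).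
  { intros s N Hs. apply lim_bound. apply Hcv; exact Hs.
    assert (Hj : forall j, Rabs (sum_f_R0 (fun k => u k s) (N + j) - sum_f_R0 (fun k => u k s) N)
                  <= (/4) ^ N * (1 - (/4) ^ j) / 3).
    { induction j.
      - rewrite Nat.add_0_r. unfold Rminus. rewrite Rplus_opp_r, Rabs_R0. simpl. lra.
      - rewrite Nat.add_succ_r, tech5.
        replace (sum_f_R0 (fun k => u k s) (N + j) + u (S (N + j)) s - sum_f_R0 (fun k => u k s) N)
          with ((sum_f_R0 (fun k => u k s) (N + j) - sum_f_R0 (fun k => u k s) N) + u (S (N + j)) s) by ring.
        eapply Rle_trans; [apply Rabs_triang|].
        pose proof (Hu (S (N + j)) s Hs).
        assert (E : (/4)^(S (N+j)) = (/4)^N * (/4*(/4)^j)) by (rewrite <- Nat.add_succ_r, pow_add; reflexivity).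
        rewrite E in H. simpl pow.
        assert (0 <= (/4)^N) by (apply pow_le; lra).
        assert (0 <= (/4)^j) by (apply pow_le; lra).
        nra. }
    intros m Hm. replace m with (N + (m - N))%nat by lia.
    eapply Rle_trans; [apply Hj|].
    assert (0 <= (/4)^N) by (apply pow_le; lra).
    assert (0 <= (/4)^(m-N)) by (apply pow_le; lra).
    nra. }
  set (u' := fun n s => f (phi s) * D n (phi s) * (/ INR (Factorial.fact n) * (t - s) ^ n)
                        + P n (phi s) * (/ INR (Factorial.fact n) * (INR n * (-1) * (t - s) ^ pred n))).
  assert (Hdu : forall n s, Rabs s < d -> is_derive (u n) s (u' n s)).
  { intros n s Hs. unfold u, u'.
    apply (is_derive_mult (fun s => P n (phi s)) (fun s => / INR (Factorial.fact n) * (t - s) ^ n)).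
    - apply (is_derive_comp (P n) phi). apply HD. apply Hphi; exact Hs.
    - apply is_derive_scal. apply (is_derive_pow (fun s => t - s)).
      apply (is_derive_eq' _ _ (0 - 1)); [|simpl; ring].
      apply (is_derive_minus (fun _ => t) (fun s => s)).
      + exact (@is_derive_const R_AbsRing R_NormedModule t s).
      + exact (@is_derive_id R_AbsRing s).
    - intros; simpl; apply Rmult_comm. }
  assert (Hsum : forall N s, sum_f_R0 (fun k => u' k s) N =
     - g (phi s) * sum_f_R0 (fun k => u k s) N
     + P (S N) (phi s) * (/ INR (Factorial.fact N) * (t - s) ^ N)).
  { intros N s. induction N.
    - simpl. unfold u', u. rewrite Hrec. simpl. field.
    - rewrite !tech5, IHN. unfold u', u. rewrite (Hrec (S N)).
      change (Factorial.fact (S N)) with (S N * Factorial.fact N)%nat.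
      rewrite mult_INR, !S_INR. cbn [pred pow].
      pose proof (Hfact N). pose proof (pos_INR N). field. lra. }
  set (gp := fun s => - g (phi s) * Ks s).
  assert (dpos : 0 < d) by exact Hd.
  set (dd := mkposreal d dpos).
  assert (HB : forall s, Boule 0 dd s -> Rabs s < d).
  { intros s Hs. unfold Boule in Hs. simpl in Hs. rewrite Rminus_0_r in Hs. exact Hs. }
  assert (Hcvu : CVU (fun n s => sum_f_R0 (fun k => u' k s) n) gp 0 dd).
  { intros eps Heps.
    destruct (pow_lt_1_zero (/2) ltac:(rewrite Rabs_right; lra) (eps / (2 * Kc))) as [N HN].
    { apply Rdiv_lt_0_compat; lra. }
    exists N. intros n s Hn Hs. apply HB in Hs.
    rewrite Hsum. unfold gp.
    replace (- g (phi s) * Ks s - (- g (phi s) * sum_f_R0 (fun k => u k s) n +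
        P (S n) (phi s) * (/ INR (Factorial.fact n) * (t - s) ^ n)))
      with (- g (phi s) * (Ks s - sum_f_R0 (fun k => u k s) n) -
        P (S n) (phi s) * (/ INR (Factorial.fact n) * (t - s) ^ n)) by ring.
    eapply Rle_lt_trans; [apply Rabs_triang|]. rewrite Rabs_Ropp.
    rewrite !Rabs_mult, Rabs_Ropp, Rabs_inv, <- RPow_abs.
    rewrite (Rabs_right (INR (Factorial.fact n))) by (apply Rle_ge, Rlt_le, Hfact).
    pose proof (Htail s n Hs). pose proof (Hg s Hs). pose proof (HP (S n) s Hs).
    pose proof (Htau s Hs). pose proof (Hfact n).
    specialize (HN n Hn). rewrite Rabs_right in HN by (apply Rle_ge, pow_le; lra).
    assert (A1 : Rabs (g (phi s)) * Rabs (Ks s - sum_f_R0 (fun k => u k s) n) <= Kc * (/4)^n).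
    { apply Rmult_le_compat; auto using Rabs_pos. }
    assert (A2 : Rabs (P (S n) (phi s)) * (/ INR (Factorial.fact n) * Rabs (t - s) ^ n)
               <= (INR n + 1) * Kc * (/4)^n).
    { apply Rle_trans with (INR (Factorial.fact (S n)) * Kc ^ (S n) * (/ INR (Factorial.fact n) * Rabs (t - s) ^ n)).
      { apply Rmult_le_compat_r; [|assumption]. apply Rmult_le_pos.
        apply Rlt_le, Rinv_0_lt_compat; lra. apply pow_le, Rabs_pos. }
      change (Factorial.fact (S n)) with (S n * Factorial.fact n)%nat. rewrite mult_INR, S_INR.
      replace ((INR n + 1) * INR (Factorial.fact n) * Kc ^ S n * (/ INR (Factorial.fact n) * Rabs (t - s) ^ n))
        with ((INR n + 1) * Kc * (Kc * Rabs (t - s)) ^ n) by (rewrite Rpow_mult_distr; simpl pow; field; lra).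
      apply Rmult_le_compat_l. pose proof (pos_INR n). nra.
      apply pow_incr. split; [apply Rmult_le_pos; [lra|apply Rabs_pos]|assumption]. }
    pose proof (geom_aux n). pose proof (pos_INR n).
    assert (0 <= (/4)^n) by (apply pow_le; lra).
    assert (Kc * ((INR n + 2) * (/ 4) ^ n) <= Kc * (2 * (/2)^n)) by (apply Rmult_le_compat_l; lra).
    assert (HH : 2 * Kc * (/2)^n < 2 * Kc * (eps / (2 * Kc))) by (apply Rmult_lt_compat_l; lra).
    replace (2 * Kc * (eps / (2 * Kc))) with eps in HH by (field; lra).
    lra. }
  assert (Hpt : forall s, Boule 0 dd s -> Un_cv (fun n => sum_f_R0 (fun k => u k s) n) (Ks s)).
  { intros s Hs. apply Hcv, HB, Hs. }
  assert (Hder : forall n s, Boule 0 dd s ->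
     derivable_pt_lim (fun s => sum_f_R0 (fun k => u k s) n) s (sum_f_R0 (fun k => u' k s) n)).
  { intros n s Hs. apply is_derive_Reals. apply HB in Hs. induction n.
    - simpl. apply Hdu; exact Hs.
    - simpl. apply (is_derive_plus (fun s => sum_f_R0 (fun k => u k s) n) (u (S n))).
      exact IHn. apply Hdu; exact Hs. }
  pose proof (CVU_derivable _ _ _ _ _ _ Hcvu Hpt Hder) as HKd.
  set (H := fun s => Ks s * G s).
  assert (HHd : forall s, Rabs s < d -> derivable_pt_lim H s 0).
  { intros s Hs. unfold H.
    replace 0 with (gp s * G s + Ks s * (g (phi s) * G s)) by (unfold gp; ring).
    apply derivable_pt_lim_mult.
    - apply HKd. unfold Boule; simpl; rewrite Rminus_0_r; exact Hs.
    - apply is_derive_Reals. apply HG; exact Hs. }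
  assert (HHt : H t = H 0).
  { destruct (Rtotal_order t 0) as [Hlt|[Heq|Hgt]].
    - destruct (MVT_cor2 H (fun _ => 0) t 0 Hlt) as [c [Hc _]].
      { intros c Hc. apply HHd. apply Rabs_def1; apply Rabs_def2 in Ht; lra. }
      lra.
    - rewrite Heq; reflexivity.
    - destruct (MVT_cor2 H (fun _ => 0) 0 t Hgt) as [c [Hc _]].
      { intros c Hc. apply HHd. apply Rabs_def1; apply Rabs_def2 in Ht; lra. }
      lra. }
  assert (HKt : Ks t = 1).
  { assert (Hs1 : forall N, sum_f_R0 (fun k => u k t) N = 1).
    { induction N.
      - simpl. unfold u. rewrite H0. simpl. field.
      - rewrite tech5, IHN. unfold u. rewrite Rminus_diag, pow_ne_zero by lia. ring. }
    apply (UL_sequence (fun N => sum_f_R0 (fun k => u k t) N)).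
    - apply Hcv; exact Ht.
    - intros eps Heps. exists 0%nat. intros n _. rewrite Hs1. unfold Rdist.
      rewrite Rminus_diag, Rabs_R0. exact Heps. }
  assert (HK0 : Ks 0 = G t).
  { unfold H in HHt. rewrite HKt, HG0 in HHt. lra. }
  rewrite <- HK0.
  apply (is_series_ext (fun n => u n 0)).
  { intros n. unfold u. rewrite Rminus_0_r. unfold Rdiv. simpl. ring. }
  apply Series_correct. apply Hex. rewrite Rabs_R0. exact Hd.
Qed.

Theorem mainTheorem9 (a b c al be ga : nat) :
  be = b ->
  (0 < a)%nat ->
  INR c ^ 2 - 4 * INR a * INR b < 0 ->
  let A := INR a in
  let B := INR c in
  let C := INR b in
  let p := - B / (2 * A) in
  let q := sqrt (- (B ^ 2 - 4 * A * C)) / (2 * A) in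
  forall x : R,
  exists delta : R, 0 < delta /\
    forall t : R, Rabs t < delta ->
      is_series (fun n => Pn a b c al be ga n x * t ^ n / INR (Factorial.fact n))
        (exp ((INR al * p + INR ga) * t) *
         Rpower (q / (sqrt ((x - p) ^ 2 + q ^ 2) * cos (A * q * t + atan ((x - p) / q))))
                (INR al / A)).
Proof.
  intros Hbe Ha Hdisc A B C p q x.
  assert (HA : 0 < A) by (apply lt_0_INR; exact Ha).
  assert (HB0 : 0 <= B) by apply pos_INR.
  assert (HC0 : 0 <= C) by apply pos_INR.
  assert (Hal : 0 <= INR al) by apply pos_INR.
  assert (Hga : 0 <= INR ga) by apply pos_INR.
  assert (HD0 : 0 < - (B ^ 2 - 4 * A * C)) by (unfold A, B, C; lra).
  assert (Hq : 0 < q) by (unfold q; apply Rdiv_lt_0_compat; [apply sqrt_lt_R0|]; lra).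
  assert (Hq2 : q ^ 2 = - (B ^ 2 - 4 * A * C) / (4 * A ^ 2)).
  { unfold q. set (X := - (B ^ 2 - 4 * A * C)) in *.
    assert (HS : sqrt X * sqrt X = X) by (apply sqrt_sqrt; lra).
    replace ((sqrt X / (2 * A)) ^ 2) with (sqrt X * sqrt X / (4 * A ^ 2)) by (field; lra).
    rewrite HS. reflexivity. }
  assert (Hfid : forall y, A * y ^ 2 + B * y + C = A * (y - p) ^ 2 + A * q ^ 2).
  { intros y. rewrite Hq2. unfold p. field. lra. }
  set (th := atan ((x - p) / q)).
  assert (Hth := atan_bound ((x - p) / q)). fold th in Hth.
  set (eps := (PI / 2 - Rabs th) / 2).
  assert (Hthabs : Rabs th < PI / 2) by (apply Rabs_def1; lra).
  assert (Heps : 0 < eps) by (unfold eps; lra).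
  set (M := PI / 2 - eps).
  assert (HM : 0 < M < PI / 2) by (unfold M, eps; pose proof (Rabs_pos th); lra).
  set (T0 := tan M).
  assert (Htan : forall z, Rabs z < M -> Rabs (tan z) <= T0).
  { intros z Hz. apply Rabs_def2 in Hz. apply Rlt_le, Rabs_def1.
    - apply tan_increasing; lra.
    - unfold T0. rewrite <- tan_neg. apply tan_increasing; lra. }
  assert (Hcos : forall z, Rabs z < M -> 0 < cos z).
  { intros z Hz. apply Rabs_def2 in Hz. apply cos_gt_0; lra. }
  assert (HT0 : 0 <= T0).
  { pose proof (Htan 0 ltac:(rewrite Rabs_R0; lra)). pose proof (Rabs_pos (tan 0)). lra. }
  set (R := Rmax 1 (Rabs p + q * T0)).
  assert (HR1 : 1 <= R) by apply Rmax_l.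
  assert (HR0 : Rabs p + q * T0 <= R) by apply Rmax_r.
  set (f := fun y => A * y ^ 2 + B * y + C).
  set (g := fun y => INR al * y + INR ga).
  set (Kc := f R + g R).
  assert (HfR : 1 <= f R).
  { unfold f. assert (1 <= R ^ 2) by (simpl; nra). assert (1 <= A).
    { unfold A. replace 1 with (INR 1) by reflexivity. apply le_INR. lia. } nra. }
  assert (HgR : 0 <= g R) by (unfold g; nra).
  assert (HK : 0 < Kc) by (unfold Kc; lra).
  set (d := Rmin (eps / (A * q)) (/ (8 * Kc))).
  assert (Hd : 0 < d).
  { unfold d. apply Rmin_pos. apply Rdiv_lt_0_compat; [lra|nra]. apply Rinv_0_lt_compat; lra. }
  assert (HdK : 8 * d * Kc <= 1).
  { pose proof (Rmin_r (eps / (A * q)) (/ (8 * Kc))). fold d in H.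
    apply Rmult_le_compat_l with (r := 8 * Kc) in H; [|lra].
    rewrite Rinv_r in H by lra. lra. }
  assert (Hz : forall s, Rabs s < d -> Rabs (th + A * q * s) < M).
  { intros s Hs. pose proof (Rmin_l (eps / (A * q)) (/ (8 * Kc))). fold d in H.
    assert (Rabs (A * q * s) < eps).
    { rewrite Rabs_mult, (Rabs_right (A * q)) by nra.
      assert (A * q * d <= eps).
      { apply Rle_trans with (A * q * (eps / (A * q))); [apply Rmult_le_compat_l; nra| right; field; nra]. }
      assert (0 < A * q) by nra. nra. }
    pose proof (Rabs_triang th (A * q * s)). unfold M, eps in *. lra. }
  set (phi := fun s => p + q * tan (th + A * q * s)).
  set (lam := INR al * p + INR ga).
  set (G := fun s => exp (lam * s + (INR al / A) * (ln (cos th) - ln (cos (th + A * q * s))))).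
  exists d. split; [exact Hd|]. intros t Ht.
  assert (Hth0 : Rabs th < M).
  { specialize (Hz 0 ltac:(rewrite Rabs_R0; lra)). rewrite Rmult_0_r, Rplus_0_r in Hz. exact Hz. }
  assert (Hcore := core (Pn a b c al be ga) (Dn a b c al be ga) f g phi G t d Kc).
  assert (Hphi0 : phi 0 = x).
  { unfold phi, th. rewrite Rmult_0_r, Rplus_0_r, tan_atan. field. lra. }
  rewrite Hphi0 in Hcore.
  match goal with |- is_series _ ?V => assert (HGt : G t = V) end.
  { pose proof (Hcos _ (Hz t Ht)) as Hct. pose proof (Hcos _ Hth0) as Hc0.
    assert (Hs1 : 0 < sqrt (1 + ((x - p) / q)²)).
    { apply sqrt_lt_R0. pose proof (Rle_0_sqr ((x - p) / q)). lra. }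
    assert (Hsq : sqrt ((x - p) ^ 2 + q ^ 2) = q * sqrt (1 + ((x - p) / q)²)).
    { replace ((x - p) ^ 2 + q ^ 2) with (q ^ 2 * (1 + ((x - p) / q)²)) by (unfold Rsqr; field; lra).
      rewrite sqrt_mult_alt by (apply pow_le; lra). rewrite sqrt_pow2 by lra. reflexivity. }
    assert (Hcth : cos th = 1 / sqrt (1 + ((x - p) / q)²)) by (unfold th; apply cos_atan).
    assert (Hfrac : q / (sqrt ((x - p) ^ 2 + q ^ 2) * cos (A * q * t + th)) = cos th / cos (th + A * q * t)).
    { rewrite Hsq, Hcth, (Rplus_comm (A * q * t) th). field. lra. }
    rewrite Hfrac.
    unfold G, Rpower. rewrite <- exp_plus. f_equal.
    rewrite ln_div by assumption. unfold lam. ring. }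
  rewrite <- HGt. apply Hcore.
  - intros n y. apply Pn_derive.
  - intros n y. apply Pn_rec; exact Hbe.
  - intros y. apply Pn_0.
  - intros n s Hs. eapply Rle_trans; [apply Pn_abs|].
    2: { apply Pn_bound; assumption. }
    unfold phi. eapply Rle_trans; [apply Rabs_triang|].
    rewrite Rabs_mult, (Rabs_right q) by lra.
    pose proof (Htan _ (Hz s Hs)). nra.
  - intros s Hs. unfold g.
    assert (Rabs (phi s) <= R).
    { unfold phi. eapply Rle_trans; [apply Rabs_triang|].
      rewrite Rabs_mult, (Rabs_right q) by lra.
      pose proof (Htan _ (Hz s Hs)). nra. }
    eapply Rle_trans; [apply Rabs_triang|].
    rewrite Rabs_mult, (Rabs_right (INR al)), (Rabs_right (INR ga)) by lra. unfold Kc, g.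
    assert (INR al * Rabs (phi s) <= INR al * R) by (apply Rmult_le_compat_l; lra). lra.
  - intros s Hs. pose proof (Hcos _ (Hz s Hs)). unfold phi. unfold tan.
    auto_derive. lra.
    unfold f. rewrite Hfid. field. lra.
  - intros s Hs. pose proof (Hcos _ (Hz s Hs)). pose proof (Hcos _ Hth0). unfold G. auto_derive.
    + exact H.
    + unfold g, phi, lam, tan, Rminus. field. lra.
  - unfold G. rewrite !Rmult_0_r, !Rplus_0_r, Rminus_diag, Rmult_0_r, Rplus_0_r. apply exp_0.
  - exact HK.
  - exact Hd.
  - exact HdK.
  - exact Ht.
Qed.
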